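(* Let $N\in\{\tfrac12,1,\tfrac32,2,\dots\}$, $n\in\{0,1,\dots,\lfloor N+\tfrac12\rfloor\}$, and $\alpha\in\mathbb{C}$ with $\alpha+1$ not a nonpositive integer. Then for all $x\in\mathbb{C}$: $${}_3F_2\!\left(\begin{matrix}-2n,\,2n+2\alpha+1,\,-x-N-\frac12\\ \alpha+1,\,-2N-1\end{matrix};1\right)={}_4F_3\!\left(\begin{matrix}-n,\,n+\alpha+\frac12,\,-x-N-\frac12,\,x-N-\frac12\\ \alpha+1,\,-N-\frac12,\,-N\end{matrix};1\right),$$ i.e. $Q_{2n}(x+N+\tfrac12;\alpha,\alpha,2N+1)=R_n\big(x^2-(N+\tfrac12)^2;\alpha,-\tfrac12,-N-1,-N-1\big)$ in terms of Hahn and Racah polynomials.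
   Context: ${}_rF_s$ is the generalized hypergeometric series with Pochhammer symbols $(c)_k=c(c+1)\cdots(c+k-1)$, terminating here via the numerator $-2n$ resp. $-n$. Hahn: $Q_n(x;\alpha,\beta,N)={}_3F_2(-n,n+\alpha+\beta+1,-x;\alpha+1,-N;1)$. Racah: $R_n(y(y+\gamma+\delta+1);\alpha,\beta,\gamma,\delta)={}_4F_3(-n,n+\alpha+\beta+1,-y,y+\gamma+\delta+1;\alpha+1,\beta+\delta+1,\gamma+1;1)$. *)

(* Defs.v *)
(* The complex field C is modelled by an arbitrary
   numClosedFieldType (algebraically closed number field, e.g. algC). *)
From HB Require Import structures.
From mathcomp Require Import all_boot all_order all_algebra.
Set Implicit Arguments. Unset Strict Implicit. Unset Printing Implicit Defensive.
Import Order.TTheory GRing.Theory Num.Theory.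
Local Open Scope ring_scope.

Definition poch {R : pzRingType} (c : R) (k : nat) : R :=
  \prod_(i < k) (c + i%:R).

(* Generalized hypergeometric series  pFq(a; b; z), truncated at index m
   (used for terminating series, where all terms with k > m vanish because a
   numerator parameter equals -m). *)
Definition hypF {R : fieldType} (a b : seq R) (z : R) (m : nat) : R :=
  \sum_(k < m.+1)
    (\prod_(c <- a) poch c k) / (\prod_(d <- b) poch d k) * z ^+ k / (k`!)%:R.

(* Main.v *)
Require Import Defs.
From HB Require Import structures.
From mathcomp Require Import all_boot all_order all_algebra.
From mathcomp Require Import ring zify.
Import Order.TTheory GRing.Theory Num.Theory.
Local Open Scope ring_scope.

Section P.
Variable R : numFieldType.
Implicit Types c a b : R.

Lemma poch0 c : poch c 0 = 1.
Proof. by rewrite /poch big_ord0. Qed.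

Lemma pochS c k : poch c k.+1 = poch c k * (c + k%:R).
Proof. by rewrite /poch big_ord_recr. Qed.

Lemma poch_add c m l : poch c (m + l) = poch c m * poch (c + m%:R) l.
Proof.
elim: l => [|l IH]; first by rewrite addn0 poch0 mulr1.
by rewrite addnS !pochS IH natrD addrA mulrA.
Qed.

Lemma poch1 c : poch c 1 = c.
Proof. by rewrite pochS poch0 mul1r addr0. Qed.

Lemma poch_refl c l : poch c l = (-1) ^+ l * poch (- c - l%:R + 1) l.
Proof.
elim: l => [|l IH]; first by rewrite !poch0 expr0 mulr1.
rewrite pochS IH -add1n poch_add poch1 exprS.
have -> : - c - l.+1%:R + 1 + 1%:R = - c - l%:R + 1.
  by rewrite -natr1; ring.
rewrite -natr1; ring.
Qed.

Lemma poch_negnat_gt (n j : nat) : (n < j)%N -> poch (- n%:R : R) j = 0.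
Proof.
move=> lt; rewrite -(subnKC lt) poch_add pochS addNr mulr0 mul0r //.
Qed.

Lemma poch_neq0 c k : (forall i : nat, (i < k)%N -> c + i%:R != 0) -> poch c k != 0.
Proof.
elim: k => [|k IH] H; first by rewrite poch0 oner_neq0.
rewrite pochS mulf_neq0 //; last exact: H.
by apply: IH => i lt; apply: H; rewrite ltnS ltnW.
Qed.

Lemma poch_double c j :
  poch c (2 * j) = 4 ^+ j * poch (c / 2) j * poch ((c + 1) / 2) j.
Proof.
elim: j => [|j IH]; first by rewrite muln0 !poch0 expr0 !mulr1.
rewrite mulnS addnC poch_add IH !pochS. idtac.
rewrite natrM exprS.
have h2 : (2 : R) != 0 by rewrite pnatr_eq0.
rewrite poch0; field; done.
Qed.

Lemma vandermonde a b j :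
  poch (a + b) j = \sum_(m < j.+1) 'C(j, m)%:R * poch a m * poch b (j - m).
Proof.
elim: j => [|j IH].
  by rewrite big_ord_recl big_ord0 !poch0 bin0 addr0 !mul1r.
have E1 : \sum_(m < j.+2) 'C(j.+1, m)%:R * poch a m * poch b (j.+1 - m) =
   \sum_(m < j.+2) 'C(j, m)%:R * poch a m * poch b (j.+1 - m) +
   \sum_(m < j.+1) 'C(j, m)%:R * poch a m.+1 * poch b (j - m).
  rewrite big_ord_recl [X in _ = X + _]big_ord_recl !bin0 -addrA -big_split /=; congr (_ + _).
  by apply: eq_bigr => i _; rewrite /bump /= binS natrD !mulrDl subSS.
have E2 : \sum_(m < j.+2) 'C(j, m)%:R * poch a m * poch b (j.+1 - m) =
   \sum_(m < j.+1) 'C(j, m)%:R * poch a m * poch b (j - m) * (b + (j - m)%:R).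
  rewrite big_ord_recr /= bin_small // mul0r mul0r addr0.
  by apply: eq_bigr => i _; rewrite subSn ?pochS ?mulrA // -ltnS.
rewrite E1 E2 -big_split pochS IH mulr_suml; apply: eq_bigr => i _ /=.
have hi : (i <= j)%N by rewrite -ltnS.
rewrite pochS natrB //; ring.
Qed.

Lemma reindex (G : nat -> R) j K : (2 * j < K)%N ->
  (forall m, (j < m)%N -> G m = 0) ->
  \sum_(m < j.+1) G m = \sum_(k < K) (if (j <= k)%N then G (k - j)%N else 0).
Proof.
move=> hK hG.
pose F k := if (j <= k)%N then G (k - j)%N else 0.
have -> : \sum_(k < K) (if (j <= k)%N then G (k - j)%N else 0) = \sum_(0 <= k < K) F k.
  by rewrite big_mkord.
rewrite (@big_cat_nat _ _ _ j 0 K) /=; [|lia|lia].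
rewrite [X in _ = X + _]big_nat_cond [X in _ = X + _]big1 ?add0r; last first.
  move=> k; rewrite andbT => /andP[_ lt]; by rewrite /F leqNgt lt.
have -> : \sum_(j <= i < K) F i = \sum_(0 <= i < K - j) F (i + j)%N.
  by rewrite -{1}(add0n j) big_addn.
rewrite /F.
under [X in _ = X]eq_bigr => i _ do rewrite leq_addl addnK.
rewrite (@big_cat_nat _ _ _ j.+1 0 (K - j)) /=; [|lia|lia].
rewrite [X in _ = _ + X]big_nat_cond [X in _ = _ + X]big1 ?addr0; last first.
  move=> k; rewrite andbT => /andP[lt _]; by apply: hG.
by rewrite big_mkord.
Qed.

Lemma expandB (y P : R) j K : (2 * j < K)%N ->
  poch (- y) j * poch (y - P) j =
  \sum_(k < K) (if (j <= k)%N then (-1) ^+ j * 'C(j, (k - j)%N)%:R *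
      poch (P + 1 - (2 * j)%:R) (2 * j - k)%N * poch (- y) k else 0).
Proof.
move=> hK.
pose G m := (-1) ^+ j * 'C(j, m)%:R * poch (P + 1 - (2 * j)%:R) (j - m)%N * poch (- y) (j + m)%N.
transitivity (\sum_(m < j.+1) G m).
  rewrite (poch_refl (y - P)).
  have -> : - (y - P) - j%:R + 1 = (- y + j%:R) + (P + 1 - (2 * j)%:R).
    by rewrite natrM; ring.
  rewrite vandermonde !mulr_sumr; apply: eq_bigr => m _.
  rewrite /G poch_add; ring.
rewrite (reindex G j K hK).
  apply: eq_bigr => k _; case: ifP => // hjk.
  rewrite /G.
  have -> : (j + (k - j) = k)%N by lia.
  by have -> : (j - (k - j) = 2 * j - k)%N by lia.
by move=> m hm; rewrite /G bin_small // mulr0 !mul0r.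
Qed.
End P.


Section Core.
Variable R : numFieldType.
Variable n : nat.
Variable al : R.
Hypothesis hal : forall i : nat, al + 1 + i%:R != 0.

Definition ww j : R := poch (- n%:R) j * poch (n%:R + al + 2^-1) j * (-4) ^+ j /
   (poch (al + 1) j * (j`!)%:R).
Definition BB (j k : nat) : R := if (j <= k)%N then ('C(j, k - j))%:R else 0.
Definition GG k j : R := - (j%:R + al) * (2 * j%:R - k%:R - 1) * ww j * BB j k.+1.

Lemma pal j : poch (al + 1) j != 0.
Proof. by apply: poch_neq0 => i _; apply: hal. Qed.

Lemma fact_neq0 j : (j`!)%:R != 0 :> R.
Proof. by rewrite pnatr_eq0 -lt0n fact_gt0. Qed.

Lemma wwS j : ww j.+1 = ww j * ((-4) * (j%:R - n%:R) * (j%:R + (n%:R + al + 2^-1))) /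
   ((al + 1 + j%:R) * (j.+1)%:R).
Proof.
rewrite /ww !pochS exprS factS natrM.
have h1 := pal j. have h2 := hal j. have h3 := fact_neq0 j.
have h4 : (j.+1)%:R != 0 :> R by rewrite pnatr_eq0.
have h5 : 1 + j%:R != 0 :> R by rewrite addrC natr1.
by field; rewrite h5 h2 h3 h1.
Qed.
Definition XX k : R := (k%:R - 2 * n%:R) * (k%:R + 2 * n%:R + 2 * al + 1).

Lemma pointwise j k : (al + 1 + k%:R) * (k.+1)%:R * (ww j * BB j k.+1) +
   XX k * (ww j * BB j k) = GG k j.+1 - GG k j.
Proof.
rewrite /GG /XX.
case: (leqP j k) => hjk.
  have [m ->] : exists m, k = (j + m)%N by exists (k - j)%N; lia.
  have E1 : BB j (j + m) = ('C(j, m))%:R by rewrite /BB leq_addr addKn.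
  have E2 : BB j (j + m).+1 = ('C(j, m.+1))%:R by rewrite /BB ifT; [congr (_%:R); congr 'C(_,_)|]; lia.
  have E3 : BB j.+1 (j + m).+1 = ('C(j.+1, m))%:R by rewrite /BB ifT; [congr (_%:R); congr 'C(_,_)|]; lia.
  rewrite E1 E2 E3 wwS.
  case: (leqP m j) => hmj.
    have C1 : ('C(j, m.+1))%:R = (j%:R - m%:R) * ('C(j, m))%:R / (m.+1)%:R :> R.
      have hm : (m.+1)%:R != 0 :> R by rewrite pnatr_eq0.
      apply: (mulIf hm); rewrite mulfVK // -natrB // -!natrM; congr (_%:R).
      by rewrite mulnC mul_bin_left.
    have C2 : ('C(j.+1, m))%:R = (j.+1)%:R * ('C(j, m))%:R / ((j.+1)%:R - m%:R) :> R.
      have hm : ((j.+1)%:R - m%:R) != 0 :> R.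
        by rewrite -natrB ?pnatr_eq0 ?subn_eq0 -?ltnNge //; lia.
      apply: (mulIf hm); rewrite mulfVK // -natrB ?(leqW hmj) // -!natrM; congr (_%:R).
      by rewrite mulnC -mul_bin_down.
    rewrite C1 C2.
    have h2 := hal j.
    have h4 : (j.+1)%:R != 0 :> R by rewrite pnatr_eq0.
    have hm : (m.+1)%:R != 0 :> R by rewrite pnatr_eq0.
    have hm2 : ((j.+1)%:R - m%:R) != 0 :> R.
      by rewrite -natrB ?pnatr_eq0 ?subn_eq0 -?ltnNge //; lia.
    have hm' : 1 + m%:R != 0 :> R by rewrite addrC natr1 pnatr_eq0.
    have hj' : 1 + j%:R != 0 :> R by rewrite addrC natr1 pnatr_eq0.
    have hm2' : 1 + j%:R - m%:R != 0 :> R by rewrite [1 + _]addrC natr1.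
    by rewrite natrD; field; rewrite hm' hm2' hj' h2.
  rewrite (bin_small hmj) (@bin_small j m.+1); last by lia.
  case: (ltngtP m j.+1) => hm; first by lia.
    by rewrite bin_small // !(mulr0, mul0r, subrr, addr0, oppr0, subr0).
  subst m; rewrite binn !mulr0 !addr0 mulr1 natrD. rewrite -!natr1. ring.
have E1 : BB j k = 0 by rewrite /BB leqNgt hjk.
have E3 : BB j.+1 k.+1 = 0 by rewrite /BB ltnS leqNgt hjk.
rewrite E1 E3 !(mulr0, mul0r, addr0, subr0, sub0r).
case: (ltngtP j k.+1) => hj; first by lia.
  by rewrite /BB leqNgt hj !mulr0 oppr0.
subst j; rewrite /BB leqnn subnn bin0 -!natr1; ring.
Qed.
Definition SS k : R := \sum_(j < k.+1) ww j * BB j k.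
Definition TT k : R := (-1) ^+ k * poch (- (2 * n)%:R) k *
   poch ((2 * n)%:R + 2 * al + 1) k / (poch (al + 1) k * (k`!)%:R).

Lemma SS_rec k : (al + 1 + k%:R) * (k.+1)%:R * SS k.+1 + XX k * SS k = 0.
Proof.
have -> : SS k = \sum_(j < k.+2) ww j * BB j k.
  by rewrite /SS [RHS]big_ord_recr /= {3}/BB ltnn mulr0 addr0.
rewrite /SS !mulr_sumr -big_split /=.
under eq_bigr => j _ do rewrite pointwise.
rewrite -(big_mkord xpredT (fun j => GG k j.+1 - GG k j)) telescope_sumr //.
by rewrite /GG /BB ltnn leq0n subn0 bin_small // !mulr0 subrr.
Qed.

Lemma TT_rec k : (al + 1 + k%:R) * (k.+1)%:R * TT k.+1 + XX k * TT k = 0.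
Proof.
rewrite /TT /XX !pochS exprS factS natrM.
have h1 := pal k. have h2 := hal k. have h3 := fact_neq0 k.
have h5 : 1 + k%:R != 0 :> R by rewrite addrC natr1 pnatr_eq0.
rewrite ?natrM.
by field; rewrite h5 h2 h3 h1.
Qed.

Lemma SS_TT k : SS k = TT k.
Proof.
elim: k => [|k IH].
  by rewrite /SS /TT big_ord_recr big_ord0 /= /ww /BB !poch0 expr0 fact0 leqnn bin0 !mulr1 !mul1r add0r.
have hc : (al + 1 + k%:R) * (k.+1)%:R != 0 :> R by rewrite mulf_neq0 // pnatr_eq0.
apply: (mulfI hc).
have e1 : (al + 1 + k%:R) * (k.+1)%:R * SS k.+1 = - (XX k * SS k).
  by apply/eqP; rewrite -addr_eq0 SS_rec.
have e2 : (al + 1 + k%:R) * (k.+1)%:R * TT k.+1 = - (XX k * TT k).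
  by apply/eqP; rewrite -addr_eq0 TT_rec.
by rewrite e1 e2 IH.
Qed.
End Core.


Section Term.
Variable R : numFieldType.

Lemma sign_sub (j k : nat) : (k <= 2 * j)%N -> (-1) ^+ (2 * j - k) = (-1) ^+ k :> R.
Proof. by move=> h; rewrite -signr_odd oddB // oddM /= signr_odd. Qed.

Lemma pochP (P : R) (j k : nat) : (k <= 2 * j)%N ->
  poch (- P) (2 * j) = poch (- P) k * ((-1) ^+ k * poch (P + 1 - (2 * j)%:R) (2 * j - k)).
Proof.
move=> hk.
have e : (2 * j = k + (2 * j - k))%N by lia.
rewrite {1}e poch_add (poch_refl _ (- P + k%:R)) sign_sub //; congr (_ * (_ * poch _ _)).
rewrite natrB //; ring.
Qed.

Lemma sum_widen (F : nat -> R) a b : (a <= b)%N ->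
  (forall i, (a <= i)%N -> (i < b)%N -> F i = 0) ->
  \sum_(i < a) F i = \sum_(i < b) F i.
Proof.
move=> hab hF; rewrite (big_ord_widen _ F hab) big_mkcond /=.
apply: eq_bigr => i _; case: ifP => // h.
by rewrite hF // leqNgt h.
Qed.

Lemma termwise (M n j k : nat) (al Y : R) :
  (forall i : nat, al + 1 + i%:R != 0) ->
  (2 * n <= M.+1)%N -> (j <= n)%N -> (k <= 2 * n)%N ->
  poch (- n%:R) j * poch (n%:R + al + 2^-1) j /
     (poch (al + 1) j * (poch (- (M.+1)%:R / 2) j * poch ((- (M.+1)%:R + 1) / 2) j)) / (j`!)%:R
   * (if (j <= k)%N then (-1) ^+ j * 'C(j, (k - j)%N)%:R *
        poch ((M.+1)%:R + 1 - (2 * j)%:R) (2 * j - k)%N * Y else 0)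
  = ww R n al j * BB R j k * ((-1) ^+ k / poch (- (M.+1)%:R) k) * Y.
Proof.
move=> hal hM hj hk.
set P : R := (M.+1)%:R.
case: (leqP j k) => hjk; last by rewrite /BB leqNgt hjk /= !mulr0 !mul0r.
case: (leqP k (2 * j)) => hk2; last first.
  rewrite /BB hjk /= bin_small; [by rewrite !(mulr0, mul0r) | lia].
rewrite /BB hjk.
have h2 : (2 : R) != 0 by rewrite pnatr_eq0.
have h4 : (4 : R) ^+ j != 0 by rewrite expf_neq0 // pnatr_eq0.
have hA : poch (- P) k != 0.
  apply: poch_neq0 => i hi; rewrite addrC subr_eq0 /P eqr_nat; lia.
have hQ : poch (P + 1 - (2 * j)%:R) (2 * j - k) != 0.
  apply: poch_neq0 => i hi.
  have -> : P + 1 - (2 * j)%:R + i%:R = ((M.+2 + i) - 2 * j)%N%:R.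
    rewrite natrB; last by lia.
    rewrite /P natrD -!natr1; ring.
  rewrite pnatr_eq0; lia.
have hX : poch (- P / 2) j * poch ((- P + 1) / 2) j =
    poch (- P) k * ((-1) ^+ k * poch (P + 1 - (2 * j)%:R) (2 * j - k)) / 4 ^+ j.
  by rewrite -pochP // poch_double; field.
rewrite hX /ww.
have e4 : (-4 : R) ^+ j = (-1) ^+ j * 4 ^+ j by rewrite -exprMn mulN1r.
rewrite e4.
have hb := @pal R al hal j. have hf := fact_neq0 R j.
rewrite -signr_odd; case: (odd k); rewrite ?expr0 ?expr1; by field; rewrite hA hf hb h4 hQ.
Qed.
End Term.


Theorem mainTheorem15 (C : numClosedFieldType) (M n : nat) (alpha x : C) :
  (1 <= M)%N ->
  (n <= uphalf M)%N ->
  (forall k : nat, alpha + 1 != - (k%:R)) ->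
  let N : C := M%:R / 2 in
  hypF [:: - (2 * n)%:R; (2 * n)%:R + 2 * alpha + 1; - x - N - 2^-1]
       [:: alpha + 1; - 2 * N - 1] 1 (2 * n)
  =
  hypF [:: - n%:R; n%:R + alpha + 2^-1; - x - N - 2^-1; x - N - 2^-1]
       [:: alpha + 1; - N - 2^-1; - N] 1 n.
Proof.
move=> hM hn hal0 N.
have hal : forall i : nat, alpha + 1 + i%:R != 0.
  by move=> i; rewrite addr_eq0.
have h2n : (2 * n <= M.+1)%N by lia.
set y := x + N + 2^-1.
set P : C := (M.+1)%:R.
have h2 : (2:C) != 0 by rewrite pnatr_eq0.
have ey1 : - x - N - 2^-1 = - y by rewrite /y; ring.
have ey2 : x - N - 2^-1 = y - P by rewrite /y /P /N -natr1; field.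
have e3 : - 2 * N - 1 = - P by rewrite /P /N -natr1; field.
have e4 : - N - 2^-1 = - P / 2 by rewrite /P /N -natr1; field.
have e5 : - N = (- P + 1) / 2 by rewrite /P /N -natr1; field.
rewrite ey1 ey2 e3 e4 e5 /hypF.
under eq_bigr => k _ do rewrite !big_cons big_nil expr1n !mulr1.
under [in RHS]eq_bigr => k _ do rewrite !big_cons big_nil expr1n !mulr1.
pose Dj (j : nat) := poch (- n%:R) j * poch (n%:R + alpha + 2^-1) j /
     (poch (alpha + 1) j * (poch (- P / 2) j * poch ((- P + 1) / 2) j)) / (j`!)%:R.
pose IT (j k : nat) := if (j <= k)%N then (-1) ^+ j * 'C(j, (k - j)%N)%:R *
        poch (P + 1 - (2 * j)%:R) (2 * j - k)%N * poch (- y) k else 0.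
transitivity (\sum_(j < n.+1) \sum_(k < (2 * n).+1) Dj j * IT j k); last first.
  apply: eq_bigr => j _.
  rewrite -mulr_sumr (expandB _ y P j (2 * n).+1); last by have := ltn_ord j; lia.
  rewrite /Dj /IT; ring.
rewrite exchange_big /=; apply: eq_bigr => k _.
have hk : (k <= 2 * n)%N by have := ltn_ord k; lia.
transitivity (\sum_(j < n.+1) ww C n alpha j * BB C j k * ((-1) ^+ k / poch (- P) k) * poch (- y) k); last first.
  apply: eq_bigr => j _.
  have hj : (j <= n)%N by have := ltn_ord j; lia.
  by rewrite /Dj /IT (termwise _ _ _ _ _ _ _ hal h2n hj hk).
rewrite -!mulr_suml.
have eS : \sum_(i < n.+1) ww C n alpha i * BB C i k = SS C n alpha k.
  rewrite /SS (@sum_widen _ (fun i => ww C n alpha i * BB C i k) (n.+1) (2 * n).+1); last first.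
  - by move=> i hi _; rewrite /ww poch_negnat_gt // !mul0r.
  - lia.
  rewrite (@sum_widen _ (fun i => ww C n alpha i * BB C i k) (k.+1) (2 * n).+1) //; try lia.
  by move=> i hi _; rewrite /BB leqNgt hi mulr0.
rewrite eS SS_TT // /TT.
have hA : poch (- P) k != 0.
  apply: poch_neq0 => i hi; rewrite addrC subr_eq0 /P eqr_nat; lia.
have hb := @pal C alpha hal k. have hf := fact_neq0 C k.
by rewrite -signr_odd; case: (odd k); rewrite ?expr0 ?expr1; field; rewrite hA hf hb.
Qed.
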